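(* Let $G$ be a simple graph on $n$ vertices with $cM_2(G)\ge cM_2(H)$ for every simple graph $H$ on $n$ vertices, and let $X$ be as defined in the context. Then every $u\in X$ satisfies $d_{G[X]}(u)\ge |X|-2$.
   Context: All graphs are finite and simple; $d_G(u)$ is the degree of $u$ and $cM_2(G)=\sum_{uv\in E(G)}|d_G(u)^2-d_G(v)^2|$; $G[X]$ is the subgraph induced by $X$. The canonical mixed graph $F$ of $G$ has vertex set $V(G)$; for each edge $uv\in E(G)$: if $d_G(u)>d_G(v)$ then $F$ contains the arc $\overrightarrow{uv}$, and if $d_G(u)=d_G(v)$ then $F$ contains the undirected edge $uv$. $d^+_F(u)$ (resp. $d^-_F(u)$) is the number of arcs of $F$ with tail (resp. head) $u$. $X=\{u\in V(G): d^+_F(u)\ge d^-_F(u)\}$. *)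

(* Defs.v *)
From mathcomp Require Import all_boot all_order.
Set Implicit Arguments. Unset Strict Implicit. Unset Printing Implicit Defensive.

Definition simple_graph (n : nat) (e : rel 'I_n) : Prop :=
  symmetric e /\ irreflexive e.

Definition deg (n : nat) (e : rel 'I_n) (u : 'I_n) : nat := #|[set v | e u v]|.

Definition absdiff (a b : nat) : nat := maxn a b - minn a b.

Definition cM2 (n : nat) (e : rel 'I_n) : nat :=
  \sum_(u : 'I_n) \sum_(v : 'I_n | (u < v) && e u v)
     absdiff (deg e u ^ 2) (deg e v ^ 2).

(* Canonical mixed graph F: arc u->v iff uv in E(G) and d(u) > d(v). *)
Definition outdegF (n : nat) (e : rel 'I_n) (u : 'I_n) : nat :=
  #|[set v | e u v && (deg e v < deg e u)]|.
Definition indegF (n : nat) (e : rel 'I_n) (u : 'I_n) : nat :=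
  #|[set v | e u v && (deg e u < deg e v)]|.

Definition Xset (n : nat) (e : rel 'I_n) : {set 'I_n} :=
  [set u | indegF e u <= outdegF e u].

Definition deg_induced (n : nat) (e : rel 'I_n) (A : {set 'I_n}) (u : 'I_n) : nat :=
  #|[set v in A | e u v]|.

(* Main.v *)
Require Import Defs.
From mathcomp Require Import all_boot all_order all_algebra zify ring.
Import Order.TTheory GRing.Theory Num.Theory.
Local Open Scope ring_scope.
Set Implicit Arguments. Unset Strict Implicit. Unset Printing Implicit Defensive.

Lemma key (da dx : nat) : (absdiff ((da.+1)^2) (dx^2))%:Z - (absdiff (da^2) (dx^2))%:Z = (((da.+1)^2)%:Z - (da^2)%:Z) * (if (dx <= da)%N then 1 else -1).
Proof.
rewrite /absdiff; case: leqP => H.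
  have : (dx ^2 <= da^2)%N by rewrite leq_exp2r.
  rewrite mulr1. lia.
have : (da.+1 ^2 <= dx^2)%N by rewrite leq_exp2r.
rewrite mulrN1. lia.
Qed.

Lemma absdiffC m k : absdiff m k = absdiff k m.
Proof. by rewrite /absdiff maxnC minnC. Qed.

Section S.
Variable n : nat.
Implicit Types g h : rel 'I_n.

Definition F g x y : int := (absdiff (deg g x ^ 2) (deg g y ^ 2))%:Z.
Definition T g : int := \sum_x \sum_(y | g x y) F g x y.
Definition sg g x y : int := if (deg g y <= deg g x)%N then 1 else -1.
Definition c g x : int := \sum_(y | g x y) sg g x y.
Definition Dq g x : int := (deg g x ^ 2)%:Z.
Definition addE g (a b : 'I_n) : rel 'I_n :=
  fun x y => g x y || ((x == a) && (y == b)) || ((x == b) && (y == a)).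

Lemma FC g x y : F g x y = F g y x.
Proof. by rewrite /F absdiffC. Qed.

Lemma sum_delta (a : 'I_n) (K : 'I_n -> int) :
  \sum_x (if x == a then K x else 0) = K a.
Proof. by rewrite -big_mkcond big_pred1_eq. Qed.

Lemma cM2_T g : simple_graph g -> T g = (cM2 g)%:Z * 2.
Proof.
move=> [sym irr].
have PS : forall (I : Type) r (P : pred I) (G : I -> nat),
    (\sum_(i <- r | P i) G i)%N%:Z = \sum_(i <- r | P i) (G i)%:Z.
  by move=> I r P G; rewrite (big_morph Posz PoszD (erefl _)).
rewrite /cM2 PS mulr_natr mulr2n.
rewrite /T.
have E : forall x, \sum_(y | g x y) F g x y =
   \sum_(y : 'I_n) (if (x < y)%N && g x y then F g x y else 0)
 + \sum_(y : 'I_n) (if (y < x)%N && g x y then F g x y else 0).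
  move=> x; rewrite big_mkcond -big_split /=; apply: eq_bigr => y _.
  case: (ltngtP x y) => H /=; rewrite ?addr0 ?add0r //.
  by move/val_inj: H => ->; rewrite irr.
rewrite (eq_bigr _ (fun x _ => E x)) big_split /=.
have E2 : forall x : 'I_n, ((\sum_(v < n | (x < v)%N && g x v) absdiff (deg g x ^ 2) (deg g v ^ 2))%N)%:Z
   = \sum_(y : 'I_n) (if (x < y)%N && g x y then F g x y else 0).
  by move=> x; rewrite PS big_mkcond.
rewrite (eq_bigr _ (fun x _ => E2 x)).
congr (_ + _).
rewrite exchange_big /=; apply: eq_bigr => x _.
by apply: eq_bigr => y _; rewrite sym FC.
Qed.


Lemma stepF g h x y : deg h x = (deg g x).+1 -> deg h y = deg g y ->
  F h x y - F g x y = (Dq h x - Dq g x) * sg g x y.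
Proof. by move=> E1 E2; rewrite /F /Dq /sg E1 E2 key. Qed.

Ltac simp := rewrite ?addr0 ?add0r ?subr0 ?oppr0 ?subrr.

Section Add.
Variables (g : rel 'I_n) (a b : 'I_n).
Hypotheses (sg_g : simple_graph g) (hab : a != b) (nab : ~~ g a b).
Let h := addE g a b.

Lemma addE_simple : simple_graph h.
Proof.
case: sg_g => sym irr; split.
  move=> x y; rewrite /h /addE sym -!orbA; congr (_ || _).
  by rewrite orbC andbC [(y == b) && _]andbC.
move=> x; rewrite /h /addE irr /=.
by case: (eqVneq x a) => [->|_]; rewrite /= ?(negbTE hab) ?andbF.
Qed.

Lemma deg_add x : deg h x = (deg g x + (x == a) + (x == b))%N.
Proof.
case: sg_g => sym irr.
have hba : b != a by rewrite eq_sym.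
rewrite /deg.
case: (eqVneq x a) => [->|xa].
  rewrite (negbTE hab) addn0 addn1.
  have -> : [set v | h a v] = b |: [set v | g a v].
    apply/setP => y; rewrite !inE /h /addE eqxx (negbTE hab) /=.
    by rewrite orbF orbC.
  by rewrite cardsU1 inE (negbTE nab) add1n.
case: (eqVneq x b) => [->|xb].
  rewrite addn0 addn1.
  have -> : [set v | h b v] = a |: [set v | g b v].
    apply/setP => y; rewrite !inE /h /addE eqxx (negbTE hba) /=.
    by rewrite orbF orbC.
  by rewrite cardsU1 inE sym (negbTE nab) add1n.
rewrite !addn0; apply: eq_card => y; rewrite !inE /h /addE.
by rewrite (negbTE xa) (negbTE xb) /= !orbF.
Qed.

Definition psi a' y : int := if g a' y then (Dq h a' - Dq g a') * sg g a' y else 0.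
Definition phi a' x y : int := if x == a' then psi a' y else 0.
Definition pr x y : int := (if x == a then (if y == b then F h a b else 0) else 0)
   + (if x == b then (if y == a then F h a b else 0) else 0).

Lemma delta x y : (if h x y then F h x y else 0) - (if g x y then F g x y else 0) =
  phi a x y + phi a y x + phi b x y + phi b y x + pr x y.
Proof.
case: sg_g => sym irr.
have dA : deg h a = (deg g a).+1 by rewrite deg_add eqxx ?(negbTE hab) ?(eq_sym b a) ?(negbTE hab) addn0 addn1.
have dB : deg h b = (deg g b).+1 by rewrite deg_add eqxx ?(eq_sym b a) ?(negbTE hab) addn0 addn1.
have dO : forall z, z != a -> z != b -> deg h z = deg g z.
  by move=> z za zb; rewrite deg_add (negbTE za) (negbTE zb) !addn0.
have nba : ~~ g b a by rewrite sym.
have hba : b != a by rewrite eq_sym.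
rewrite /phi /pr /psi /h /addE.
case: (eqVneq x a) => [->|xa]; case: (eqVneq y a) => [->|ya];
  rewrite ?eqxx ?(negbTE hab) ?(negbTE hba) ?irr ?(negbTE nab) ?(negbTE nba) /=.
- by simp.
- case: (eqVneq y b) => [->|yb]; rewrite ?(negbTE nab) /=.
    by simp.
  rewrite !orbF; simp; case: (g a y); simp => //.
  by rewrite stepF //; apply: dO.
- case: (eqVneq x b) => [->|xb]; rewrite ?(negbTE nba) /=.
    by rewrite (negbTE nab); simp; rewrite FC.
  rewrite !orbF ?(negbTE xa) ?(negbTE xb) sym /=; simp; case: (g a x); simp => //.
  by rewrite FC [F g x a]FC stepF //; apply: dO.
- case: (eqVneq x b) => [->|xb]; case: (eqVneq y b) => [->|yb];
    rewrite ?eqxx ?(negbTE hab) ?(negbTE hba) ?irr ?(negbTE nab) ?(negbTE nba) ?(negbTE xa) ?(negbTE ya) /=.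
  + by simp.
  + rewrite !orbF; simp; case: (g b y); simp => //.
    by rewrite stepF //; apply: dO.
  + rewrite !orbF sym; simp; case: (g b x); simp => //.
    by rewrite FC [F g x b]FC stepF //; apply: dO.
  + rewrite !orbF ?(negbTE xb) ?(negbTE yb) /=; simp; case: (g x y); simp => //.
    by rewrite /F !dO // subrr.
Qed.

Lemma sum_phi a' : \sum_x \sum_y phi a' x y = (Dq h a' - Dq g a') * c g a'.
Proof.
transitivity (\sum_x (if x == a' then \sum_y psi a' y else 0)).
  apply: eq_bigr => x _; rewrite /phi; case: (x == a') => //.
  by rewrite big1.
rewrite sum_delta /c mulr_sumr [RHS]big_mkcond /=; apply: eq_bigr => y _.
by rewrite /psi.
Qed.

Lemma sum_phi' a' : \sum_x \sum_y phi a' y x = (Dq h a' - Dq g a') * c g a'.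
Proof. by rewrite exchange_big sum_phi. Qed.

Lemma sum_pr : \sum_x \sum_y pr x y = F h a b *+ 2.
Proof.
rewrite /pr.
transitivity (\sum_x ((if x == a then F h a b else 0) + (if x == b then F h a b else 0))).
  apply: eq_bigr => x _; rewrite big_split /=; congr (_ + _).
    case: (x == a); last by rewrite big1.
    by rewrite sum_delta.
  case: (x == b); last by rewrite big1.
  by rewrite sum_delta.
by rewrite big_split /= !sum_delta mulr2n.
Qed.

Lemma T_add : T h = T g + F h a b *+ 2 + ((Dq h a - Dq g a) * c g a) *+ 2
   + ((Dq h b - Dq g b) * c g b) *+ 2.
Proof.
have E : T h - T g = F h a b *+ 2 + ((Dq h a - Dq g a) * c g a) *+ 2
   + ((Dq h b - Dq g b) * c g b) *+ 2.
  rewrite /T (eq_bigr (fun x => \sum_y (if h x y then F h x y else 0)));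
    last by move=> x _; rewrite big_mkcond.
  rewrite [X in _ - X](eq_bigr (fun x => \sum_y (if g x y then F g x y else 0)));
    last by move=> x _; rewrite big_mkcond.
  rewrite -sumrB.
  rewrite (eq_bigr (fun x => \sum_y (phi a x y + phi a y x + phi b x y + phi b y x + pr x y))); last first.
    by move=> x _; rewrite -sumrB; apply: eq_bigr => y _; rewrite delta.
  rewrite (eq_bigr (fun x => \sum_y phi a x y + \sum_y phi a y x + \sum_y phi b x y + \sum_y phi b y x + \sum_y pr x y)); last first.
    by move=> x _; rewrite !big_split.
  rewrite !big_split /= sum_phi sum_phi' sum_phi sum_phi' sum_pr.
  by rewrite !mulr2n; ring.
rewrite -[T h](subrK (T g)) E; ring.
Qed.

End Add.
End S.

Lemma c_card n (g : rel 'I_n) x : c g x =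
  #|[set y | g x y && (deg g y <= deg g x)%N]|%:Z - (indegF g x)%:Z.
Proof.
have C : forall P : pred 'I_n, \sum_(y | P y) (1 : int) = #|[set y | P y]|%:Z.
  move=> P; rewrite -natz -sumr_const; apply: eq_bigl => y; by rewrite inE.
rewrite /indegF -!C /c [LHS]big_mkcond.
rewrite [X in _ = X - _]big_mkcond [X in _ = _ - X]big_mkcond /= -sumrB.
apply: eq_bigr => y _; rewrite /sg.
case: (g x y) => /=; last by rewrite subrr.
by case: leqP => H /=; rewrite ?subr0 ?sub0r.
Qed.

Lemma c_ge0 n (g : rel 'I_n) x : x \in Xset g -> 0 <= c g x.
Proof.
rewrite inE /outdegF => H; rewrite c_card subr_ge0 lez_nat.
apply: (leq_trans H); apply: subset_leq_card; apply/subsetP => y.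
by rewrite !inE => /andP [-> /ltnW ->].
Qed.

Lemma c_pos_eq n (g : rel 'I_n) x y : x \in Xset g -> g x y -> deg g y = deg g x -> 0 < c g x.
Proof.
rewrite inE /outdegF => H gxy dxy; rewrite c_card subr_gt0 ltz_nat.
apply: (leq_trans _ (proper_card _)); first by rewrite ltnS; exact: H.
apply/properP; split.
  by apply/subsetP => z; rewrite !inE => /andP [-> /ltnW ->].
by exists y; rewrite !inE gxy dxy ?leqnn /= ?ltnn.
Qed.

Lemma Dq_gt n (g h : rel 'I_n) x : deg h x = (deg g x).+1 -> 0 < Dq h x - Dq g x.
Proof.
by move=> E; rewrite /Dq E subr_gt0 ltz_nat ltn_exp2r.
Qed.

Lemma c_unchanged n (g : rel 'I_n) a b x : simple_graph g -> a != b -> ~~ g a b ->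
  x != a -> x != b -> ~~ g x a -> ~~ g x b -> c (addE g a b) x = c g x.
Proof.
move=> sg_g hab nab xa xb nxa nxb.
have hxy : forall y, addE g a b x y = g x y.
  by move=> y; rewrite /addE (negbTE xa) (negbTE xb) /= !orbF.
rewrite /c (eq_bigl (fun y => g x y)) //; apply: eq_bigr => y gxy.
have ya : y != a by apply: contraNneq nxa => <-.
have yb : y != b by apply: contraNneq nxb => <-.
rewrite /sg !deg_add // (negbTE xa) (negbTE xb) (negbTE ya) (negbTE yb).
by rewrite !addn0.
Qed.

Lemma c_u_after n (g : rel 'I_n) a b : simple_graph g -> a != b -> ~~ g a b ->
  (deg g b <= deg g a)%N -> a \in Xset g -> 0 <= c (addE g a b) a.
Proof.
move=> sg_g hab nab dba aX.
have hba : b != a by rewrite eq_sym.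
have [sym irr] := sg_g.
have dA : deg (addE g a b) a = (deg g a).+1 by rewrite deg_add // eqxx (negbTE hab) addn0 addn1.
have dB : deg (addE g a b) b = (deg g b).+1 by rewrite deg_add // eqxx (negbTE hba) addn0 addn1.
have dO : forall z, z != a -> z != b -> deg (addE g a b) z = deg g z.
  by move=> z za zb; rewrite deg_add // (negbTE za) (negbTE zb) !addn0.
move: aX; rewrite inE /outdegF => H; rewrite c_card subr_ge0 lez_nat.
apply: leq_trans (leq_trans H _).
  apply: subset_leq_card; apply/subsetP => y; rewrite !inE.
  rewrite /addE eqxx (negbTE hab) /= orbF.
  case/andP => /orP [gay | /eqP ->] lt; last by move: lt; rewrite dA dB ltnS ltnNge dba.
  have ya : y != a by apply: contraTneq gay => ->; rewrite irr.
  have yb : y != b by apply: contraNneq nab => <-.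
  by move: lt; rewrite gay /= dA dO //; apply: ltnW.
apply: subset_leq_card; apply/subsetP => y; rewrite !inE => /andP [gay lt].
have ya : y != a by apply: contraTneq gay => ->; rewrite irr.
have yb : y != b by apply: contraNneq nab => <-.
by rewrite /addE gay /= dA dO // ltnW // ltnW.
Qed.

Lemma step1 n (e : rel 'I_n) u v : simple_graph e ->
  (forall h : rel 'I_n, simple_graph h -> (cM2 h <= cM2 e)%N) ->
  u \in Xset e -> v \in Xset e -> u != v -> ~~ e u v ->
  [/\ deg e u = deg e v, c e v = 0 & T e <= T (addE e u v)].
Proof.
move=> sE mE uX vX huv nuv.
have hvu : v != u by rewrite eq_sym.
set h := addE e u v.
have sH : simple_graph h by apply: addE_simple.
have le : T h <= T e.
  by rewrite !cM2_T // ler_pM2r // lez_nat; apply: mE.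
have dA : deg h u = (deg e u).+1 by rewrite deg_add // eqxx (negbTE huv) addn0 addn1.
have dB : deg h v = (deg e v).+1 by rewrite deg_add // eqxx (negbTE hvu) addn0 addn1.
have TA := T_add sE huv nuv; rewrite -/h in TA.
have F0 : 0 <= F h u v by [].
have A0 : 0 <= (Dq h u - Dq e u) * c e u by rewrite mulr_ge0 // ?c_ge0 // ltW // Dq_gt.
have B0 : 0 <= (Dq h v - Dq e v) * c e v by rewrite mulr_ge0 // ?c_ge0 // ltW // Dq_gt.
have ge : T e <= T h by rewrite TA; lia.
have FZ : F h u v = 0 by lia.
have BZ : (Dq h v - Dq e v) * c e v = 0 by lia.
split => //.
  move: FZ; rewrite /F dA dB /absdiff => /eqP; rewrite -[0]/(Posz 0) eqz_nat subn_eq0.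
  move=> Hle; have E2 : ((deg e u).+1 ^ 2 = (deg e v).+1 ^ 2)%N by lia.
  by move/eqP: E2; rewrite eqn_sqr eqSS => /eqP.
move/eqP: BZ; rewrite mulf_eq0 => /orP [/eqP|/eqP //].
by have := Dq_gt dB; lia.
Qed.

Local Close Scope ring_scope.

Theorem corollary1 (n : nat) (e : rel 'I_n) :
  simple_graph e ->
  (forall h : rel 'I_n, simple_graph h -> cM2 h <= cM2 e) ->
  forall u : 'I_n, u \in Xset e ->
    #|Xset e| - 2 <= deg_induced e (Xset e) u.
Proof.
move=> sE mE u uX.
have [sym irr] := sE.
set X := Xset e.
set M := [set v in X | (v != u) && ~~ e u v].
have HX : (#|X| <= 1 + #|[set v in X | e u v]| + #|M|)%N.
  have sub : X \subset [set u] :|: [set v in X | e u v] :|: M.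
    apply/subsetP => v vX; rewrite !inE; move: vX; rewrite inE => -> /=.
    by case: (v == u); case: (e u v).
  apply: leq_trans (subset_leq_card sub) _.
  rewrite !cardsU cards1; lia.
rewrite /deg_induced -/X.
case: (leqP #|M| 1) => HM; first by lia.
exfalso.
case/card_gt1P: HM => v [w [vM wM vw]].
move: vM wM; rewrite !inE => /and3P [vX vu nuv] /and3P [wX wu nuw].
have uv : u != v by rewrite eq_sym.
have {vX} vX : v \in Xset e by rewrite inE.
have {wX} wX : w \in Xset e by rewrite inE.
have uw : u != w by rewrite eq_sym.
have [duv cv0 T1] := step1 sE mE uX vX uv nuv.
have [duw cw0 _] := step1 sE mE uX wX uw nuw.
have nwv : ~~ e w v.
  apply/negP => ewv; have := c_pos_eq wX ewv; rewrite -duv -duw cw0 Order.POrderTheory.ltxx.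
  by move=> /(_ erefl).
have nwu : ~~ e w u by rewrite sym.
set h1 := addE e u v.
have sH1 : simple_graph h1 by apply: addE_simple.
have nh1 : ~~ h1 u w.
  by rewrite /h1 /addE (negbTE nuw) eqxx /= (eq_sym w v) (negbTE vw) (negbTE uv).
set h2 := addE h1 u w.
have sH2 : simple_graph h2 by apply: addE_simple.
have le : (T h2 <= T e)%R.
  by rewrite !cM2_T // ler_pM2r // lez_nat; apply: mE.
have TA := T_add sH1 uw nh1; rewrite -/h2 in TA.
have d1u : deg h1 u = (deg e u).+1 by rewrite deg_add // eqxx (negbTE uv) addn0 addn1.
have d1w : deg h1 w = deg e w by rewrite deg_add // (negbTE wu) (eq_sym w v) (negbTE vw) !addn0.
have d2u : deg h2 u = (deg h1 u).+1 by rewrite deg_add // eqxx (negbTE uw) addn0 addn1.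
have wu' : w != u by [].
have d2w : deg h2 w = (deg h1 w).+1 by rewrite deg_add // eqxx (negbTE wu') addn0 addn1.
have Fp : (0 < F h2 u w)%R.
  rewrite /F d2u d2w d1u d1w -duw ltz_nat /absdiff subn_gt0.
  rewrite (maxn_idPl _) ?(minn_idPr _) ?leq_exp2r // ?ltn_exp2r // ltnW //.
have A0 : (0 <= (Dq h2 u - Dq h1 u) * c h1 u)%R.
  apply: mulr_ge0; first exact: ltW (Dq_gt d2u).
  by apply: c_u_after => //; rewrite duv.
have cw1 : c h1 w = 0%R.
  by rewrite /h1 c_unchanged // eq_sym.
have lt : (T h1 < T h2)%R.
  rewrite TA cw1 mulr0 mul0rn addr0 -addrA ltrDl.
  have P1 : (0 < F h2 u w *+ 2)%R by rewrite pmulrn_lgt0.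
  by apply: (lt_le_trans P1); rewrite lerDl mulrn_wge0.
have := lt_le_trans (le_lt_trans T1 lt) le.
by rewrite ltxx.
Qed.
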